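(* For every $\eta\in\mathcal{L}$, $c_\pi(\eta)\in[-B^{1/(1+\epsilon)},\,B^{1/(1+\epsilon)}(1-\pi)^{-1/(1+\epsilon)}]$ and $x_\pi(\eta)\in[-B^{1/(1+\epsilon)}\pi^{-1/(1+\epsilon)},\,B^{1/(1+\epsilon)}(1-\pi)^{-1/(1+\epsilon)}]$.
   Context: $\pi\in(0,1)$, $\epsilon>0$, $B>0$. $\mathcal{L}=\{\eta\in\mathcal{P}(\mathbb{R}):\mathbb{E}_\eta|X|^{1+\epsilon}\le B\}$. $F_\eta(x)=\eta((-\infty,x])$; value-at-risk $x_\pi(\eta)=\min\{z\in\mathbb{R}:F_\eta(z)\ge\pi\}$; conditional value-at-risk $c_\pi(\eta)=\frac{F_\eta(x_\pi(\eta))-\pi}{1-\pi}x_\pi(\eta)+\frac{1}{1-\pi}\int_{(x_\pi(\eta),\infty)}y\,dF_\eta(y)$. *)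

(* Defs.v *)
From HB Require Import structures.
From mathcomp Require Import all_boot all_order all_algebra.
From mathcomp Require Import all_classical all_reals all_analysis.
Set Implicit Arguments. Unset Strict Implicit. Unset Printing Implicit Defensive.
Import Order.TTheory GRing.Theory Num.Theory.
Local Open Scope classical_set_scope.
Local Open Scope ring_scope.

Definition in_L (R : realType) (eps B : R) (eta : probability R R) : Prop :=
  (\int[eta]_x ((`|x| `^ (1 + eps))%:E) <= B%:E)%E.

Definition cdf (R : realType) (eta : probability R R) (x : R) : R :=
  fine (eta `]-oo, x]%classic).

(* value-at-risk x_pi(eta) = min {z | F_eta z >= pi}; the minimum is
   attained (right-continuity of F), so it coincides with the infimum *)
Definition VaR (R : realType) (pi : R) (eta : probability R R) : R :=
  inf [set z : R | pi <= cdf eta z].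

Definition CVaR (R : realType) (pi : R) (eta : probability R R) : R :=
  let x := VaR pi eta in
  (cdf eta x - pi) / (1 - pi) * x
  + (1 - pi)^-1 * fine (\int[eta]_(y in `]x, +oo[%classic) (y%:E)).

(* Main.v *)
Require Import Defs.
From HB Require Import structures.
From mathcomp Require Import all_boot all_order all_algebra.
From mathcomp Require Import all_classical all_reals all_analysis.
From mathcomp Require Import measurable_realfun lebesgue_integral.
From mathcomp Require Import ring lra.
Import Order.TTheory GRing.Theory Num.Theory.
Local Open Scope classical_set_scope.
Local Open Scope ring_scope.
Set Implicit Arguments. Unset Strict Implicit.
Lemma powRV_ (R : realType) (t p : R) : 0 < t -> (t^-1) `^ p = (t `^ p)^-1.
Proof.
move=> t0; rewrite -powR_inv1 ?(ltW t0)// -powRrM mulN1r powRN//.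
Qed.

Lemma young_ (R : realType) (p t y : R) : 1 < p -> 0 < t ->
  `|y| <= `|y| `^ p * ((t `^ p)^-1 * t / p) + t * (1 - p^-1).
Proof.
move=> p1 t0.
have p0 : 0 < p by apply: lt_trans p1.
have ip1 : p^-1 < 1 by rewrite invf_lt1.
have q0 : 0 < (1 - p^-1)^-1 by rewrite invr_gt0 subr_gt0.
have := @conjugate_powR R (`|y| / t) 1 p (1 - p^-1)^-1 (divr_ge0 (normr_ge0 _) (ltW t0)) ler01 p0 q0.
rewrite invrK addrC subrK => /(_ erefl).
rewrite powR1 mulr1 powRM ?invr_ge0 ?(ltW t0)// powRV_// => h.
have := ler_wpM2r (ltW t0) h.
rewrite mulrDl divfK ?gt_eqF// mul1r.
move=> h2; apply: (le_trans h2); rewrite le_eqVlt; apply/orP; left; apply/eqP.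
congr (_ + _); last by rewrite mulrC.
by rewrite -!mulrA; congr (_ * _); rewrite [t / p]mulrC mulrCA.
Qed.


Lemma mP_ (R : realType) (p : R) : measurable_fun setT (fun y : R => `|y| `^ p).
Proof. apply: (@measurableT_comp _ _ _ _ _ _ (fun x : R => x `^ p) _ (@Num.norm _ R)); [exact: measurable_realfun.measurable_powR|exact: measurable_realfun.normr_measurable]. Qed.

Lemma intP_ (R : realType) (eps B : R) (eta : probability R R) (D : set R) :
  measurable D -> in_L eps B eta ->
  eta.-integrable D (EFin \o (fun y => `|y| `^ (1+eps))).
Proof.
move=> mD hL; apply: (integrableS measurableT) => //.
apply/integrableP; split. apply/measurable_EFinP. exact: mP_.
rewrite (@le_lt_trans _ _ B%:E) ?ltry//.
apply: le_trans hL; rewrite le_eqVlt; apply/orP; left; apply/eqP.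
by apply: eq_integral => y _ /=; rewrite ger0_norm// powR_ge0.
Qed.

Lemma intcst_ (R : realType) (eta : probability R R) (D : set R) (k : R) :
  measurable D -> eta.-integrable D (EFin \o cst k).
Proof. by move=> mD; exact: finite_measure_integrable_cst. Qed.

Lemma intid_ (R : realType) (eps B : R) (eta : probability R R) (D : set R) :
  0 < eps -> measurable D -> in_L eps B eta ->
  eta.-integrable D (EFin \o id).
Proof.
move=> e0 mD hL.
have h := integrableD mD (intP_ mD hL) (intcst_ eta 1 mD).
apply: le_integrable h => //; first by apply/measurable_EFinP.
move=> y _ /=; rewrite lee_fin [X in _ <= X]ger0_norm ?addr_ge0 ?powR_ge0//.
have [y1|y1] := leP 1 `|y|.
  have h1 : `|y| <= `|y| `^ (1+eps) by apply: le1r_powR => //; rewrite lerDl ltW.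
  by apply: (le_trans h1); rewrite lerDl.
by apply: (le_trans (ltW y1)); rewrite lerDr powR_ge0.
Qed.

Lemma RintP_le_ (R : realType) (eps B : R) (eta : probability R R) (D : set R) :
  measurable D -> in_L eps B eta ->
  \int[eta]_(y in D) (`|y| `^ (1+eps)) <= B.
Proof.
move=> mD hL.
have hE : (\int[eta]_(y in D) (`|y| `^ (1+eps))%:E <= B%:E)%E.
  apply: le_trans hL.
  apply: ge0_subset_integral => //. by apply/measurable_EFinP; exact: mP_.
have h0 : (0 <= \int[eta]_(y in D) (`|y| `^ (1+eps))%:E)%E.
  by apply: integral_ge0 => y _; rewrite lee_fin powR_ge0.
have -> : \int[eta]_(y in D) (`|y| `^ (1+eps)) = fine (\int[eta]_(y in D) (`|y| `^ (1+eps))%:E) by [].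
rewrite -lee_fin fineK //.
by rewrite ge0_fin_numE // (le_lt_trans hE) ?ltry.
Qed.

Lemma markov_ (R : realType) (eps B : R) (eta : probability R R) (A : set R) (z : R) :
  0 < eps -> in_L eps B eta -> measurable A -> 0 < z ->
  (forall y, A y -> z <= `|y|) -> fine (eta A) * z `^ (1 + eps) <= B.
Proof.
move=> e0 hL mA z0 Az.
apply: le_trans (RintP_le_ mA hL).
rewrite mulrC -Rintegral_cst//.
apply: le_Rintegral => //. exact: (intcst_ eta (z `^ (1+eps)) mA). exact: (intP_ mA hL).
move=> y Ay; apply: ge0_ler_powR; rewrite ?nnegrE ?Az//; last exact: ltW.
by rewrite addr_ge0 ?ltW.
Qed.


Lemma etaE_ (R : realType) (eta : probability R R) (A : set R) :
  measurable A -> ((fine (eta A))%:E = eta A)%E.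
Proof. by move=> mA; rewrite fineK// fin_num_measure. Qed.

Lemma cdf_le_ (R : realType) (eta : probability R R) (a b : R) :
  a <= b -> Defs.cdf eta a <= Defs.cdf eta b.
Proof.
move=> ab; rewrite /Defs.cdf -lee_fin !etaE_//; apply: le_measure; rewrite ?inE//.
by move=> y /=; rewrite !in_itv /= => h; apply: le_trans h ab.
Qed.

Lemma cdfC_ (R : realType) (eta : probability R R) (x : R) :
  fine (eta `]x, +oo[%classic) = 1 - Defs.cdf eta x.
Proof.
apply/EFin_inj; rewrite etaE_//. rewrite EFinB. rewrite /Defs.cdf etaE_// -setCitvl probability_setC//.
Qed.

Lemma cdfC2_ (R : realType) (eta : probability R R) (x : R) :
  fine (eta `[x, +oo[%classic) = 1 - fine (eta `]-oo, x[%classic).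
Proof.
apply/EFin_inj; rewrite etaE_// EFinB etaE_// -setCitvl probability_setC//.
Qed.

Lemma bigcap_ge_ (R : realType) (eta : probability R R) (G : nat -> set R) (c : R) :
  (forall n, measurable (G n)) -> nonincreasing_seq G ->
  (forall n, c <= fine (eta (G n))) -> c <= fine (eta (\bigcap_n G n)).
Proof.
move=> mG niG cG.
have h0 : (eta (G 0%N) < +oo)%E.
  by apply: (le_lt_trans (probability_le1 _ (mG 0%N))); exact: ltry.
have h := @nonincreasing_cvg_mu _ _ _ eta G h0 mG (bigcapT_measurable mG) niG.
rewrite -lee_fin etaE_; last exact: bigcapT_measurable. have E := cvg_lim _ h. rewrite -E//.
apply: lime_ge; first by apply/cvg_ex; eexists; exact: h.
by near=> n; rewrite /= -etaE_ ?lee_fin.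
Unshelve. all: by end_near.
Qed.


Lemma powcalc_ (R : realType) (a s p : R) : 0 < a -> 0 < s -> 0 < p ->
  (a `^ p^-1 * s `^ (- p^-1)) `^ p = a / s.
Proof.
move=> a0 s0 p0.
rewrite powRM ?powR_ge0// -!powRrM mulNr mulVf ?gt_eqF// powRr1 ?(ltW a0)//.
by rewrite powR_inv1 ?(ltW s0).
Qed.

Lemma S_upper_ (R : realType) (pi eps B : R) (eta : probability R R) (z : R) :
  0 < pi -> pi < 1 -> 0 < eps -> 0 < B -> in_L eps B eta ->
  B `^ (1 + eps)^-1 * (1 - pi) `^ (- (1 + eps)^-1) < z ->
  pi <= Defs.cdf eta z.
Proof.
move=> p0 p1 e0 B0 hL Uz.
have pe0 : 0 < 1 + eps by rewrite addr_gt0.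
have s0 : 0 < 1 - pi by rewrite subr_gt0.
have U0 : 0 < B `^ (1 + eps)^-1 * (1 - pi) `^ (- (1 + eps)^-1).
  by rewrite mulr_gt0 ?powR_gt0.
have z0 : 0 < z by apply: lt_trans Uz.
have hm := @markov_ R eps B eta `]z, +oo[%classic z e0 hL (measurable_itv _) z0.
have {hm} hm : fine (eta `]z, +oo[%classic) * z `^ (1 + eps) <= B.
  apply: hm => y /=; rewrite in_itv /= andbT => zy.
  by apply: (le_trans (ltW zy)); exact: ler_norm.
rewrite cdfC_ in hm.
have hz : B / (1 - pi) < z `^ (1 + eps).
  rewrite -(powcalc_ B0 s0 pe0); apply: gt0_ltr_powR => //.
    by rewrite nnegrE ltW.
  by rewrite nnegrE ltW.
rewrite leNgt; apply/negP => Fz.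
have : (1 - pi) * (B / (1 - pi)) < (1 - Defs.cdf eta z) * z `^ (1 + eps).
  apply: ltr_pM => //.
  - exact: ltW.
  - by rewrite divr_ge0 ?ltW.
  - by rewrite ltrD2l ltrN2.
rewrite mulrC divfK ?gt_eqF// => h.
by have := lt_le_trans h hm; rewrite ltxx.
Qed.

Lemma S_lower_ (R : realType) (pi eps B : R) (eta : probability R R) (z : R) :
  0 < pi -> pi < 1 -> 0 < eps -> 0 < B -> in_L eps B eta ->
  pi <= Defs.cdf eta z ->
  - B `^ (1 + eps)^-1 * pi `^ (- (1 + eps)^-1) <= z.
Proof.
move=> p0 p1 e0 B0 hL Fz.
have pe0 : 0 < 1 + eps by rewrite addr_gt0.
have V0 : 0 < B `^ (1 + eps)^-1 * pi `^ (- (1 + eps)^-1).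
  by rewrite mulr_gt0 ?powR_gt0.
rewrite leNgt; apply/negP => zL.
rewrite mulNr in zL.
have zV : B `^ (1 + eps)^-1 * pi `^ (- (1 + eps)^-1) < - z by rewrite ltrNr.
have z0 : 0 < - z by apply: lt_trans zV.
have hm := @markov_ R eps B eta `]-oo, z]%classic (- z) e0 hL (measurable_itv _) z0.
have {hm} hm : fine (eta `]-oo, z]%classic) * (- z) `^ (1 + eps) <= B.
  apply: hm => y /=; rewrite in_itv /= => yz.
  by rewrite ler_normr lerN2 yz orbT.
have hz : B / pi < (- z) `^ (1 + eps).
  rewrite -(powcalc_ B0 p0 pe0); apply: gt0_ltr_powR => //.
    by rewrite nnegrE ltW.
  by rewrite nnegrE ltW.
have : pi * (B / pi) < Defs.cdf eta z * (- z) `^ (1 + eps).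
  apply: (lt_le_trans (y := pi * (- z) `^ (1 + eps))).
    by rewrite ltr_pM2l.
  by rewrite ler_wpM2r ?powR_ge0.
rewrite mulrC divfK ?gt_eqF// => h.
by have := lt_le_trans h hm; rewrite ltxx.
Qed.


Lemma VaR_facts_ (R : realType) (pi eps B : R) (eta : probability R R) :
  0 < pi -> pi < 1 -> 0 < eps -> 0 < B -> in_L eps B eta ->
  [/\ - B `^ (1 + eps)^-1 * pi `^ (- (1 + eps)^-1) <= VaR pi eta,
      VaR pi eta <= B `^ (1 + eps)^-1 * (1 - pi) `^ (- (1 + eps)^-1),
      pi <= Defs.cdf eta (VaR pi eta) &
      1 - pi <= fine (eta `[VaR pi eta, +oo[%classic)].
Proof.
move=> p0 p1 e0 B0 hL.
set U := B `^ (1 + eps)^-1 * (1 - pi) `^ (- (1 + eps)^-1).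
set L := - B `^ (1 + eps)^-1 * pi `^ (- (1 + eps)^-1).
set S := [set z : R | pi <= Defs.cdf eta z].
have S0 : S !=set0.
  by exists (U + 1); apply: (S_upper_ p0 p1 e0 B0 hL); rewrite ltrDl.
have SL : lbound S L by move=> z Sz; exact: (S_lower_ p0 p1 e0 B0 hL).
have hS : has_lbound S by exists L.
have VE : VaR pi eta = inf S by [].
split.
- by rewrite VE; apply: lb_le_inf.
- rewrite VE; apply/ler_addgt0Pr => e e0'.
  apply: (ge_inf hS); apply: (S_upper_ p0 p1 e0 B0 hL); by rewrite ltrDl.
- rewrite /Defs.cdf (itvNycEbigcap false).
  apply: bigcap_ge_ => [n|n m nm|n].
  + exact: measurable_itv.
  + apply/subsetPset; apply: subset_itvl.
    by rewrite bnd_simp lerD2l lef_pV2 ?posrE// ler_nat.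
  + have : inf S < VaR pi eta + n.+1%:R^-1 by rewrite -VE ltrDl.
    case/(inf_lt S0) => s Ss sw.
    apply: (le_trans Ss); exact: cdf_le_ (ltW sw).
- rewrite itvcyEbigcap.
  apply: bigcap_ge_ => [n|n m nm|n].
  + exact: measurable_itv.
  + apply/subsetPset; apply: subset_itvr.
    by rewrite bnd_simp lerD2l lerN2 lef_pV2 ?posrE// ler_nat.
  + rewrite cdfC_ lerD2l lerN2.
    set w := VaR pi eta - n.+1%:R^-1.
    rewrite leNgt; apply/negP => wS.
    have : inf S <= w by apply: (ge_inf hS); exact: ltW.
    by rewrite -VE /w lerDl oppr_ge0 leNgt invr_gt0 ltr0n.
Qed.


Lemma intnorm_ (R : realType) (eps B : R) (eta : probability R R) (D : set R) :
  0 < eps -> measurable D -> in_L eps B eta ->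
  eta.-integrable D (EFin \o (fun y : R => `|y|)).
Proof.
move=> e0 mD hL.
have h := integrableD mD (intP_ mD hL) (intcst_ eta 1 mD).
apply: le_integrable h => //.
  apply/measurable_EFinP; exact: measurable_realfun.normr_measurable.
move=> y _ /=; rewrite lee_fin normr_id [X in _ <= X]ger0_norm ?addr_ge0 ?powR_ge0//.
have [y1|y1] := leP 1 `|y|.
  have h1 : `|y| <= `|y| `^ (1+eps) by apply: le1r_powR => //; rewrite lerDl ltW.
  by apply: (le_trans h1); rewrite lerDl.
by apply: (le_trans (ltW y1)); rewrite lerDr powR_ge0.
Qed.

Lemma young_int_ (R : realType) (eps B : R) (eta : probability R R) (D : set R) (t : R) :
  0 < eps -> measurable D -> in_L eps B eta -> 0 < t ->
  \int[eta]_(y in D) `|y| <=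
  (\int[eta]_(y in D) (`|y| `^ (1 + eps))) * ((t `^ (1 + eps))^-1 * t / (1 + eps))
  + t * (1 - (1 + eps)^-1) * fine (eta D).
Proof.
move=> e0 mD hL t0.
set c := ((t `^ (1 + eps))^-1 * t / (1 + eps)).
have iZ : eta.-integrable D (EFin \o (fun y => `|y| `^ (1+eps) * c)).
  have := integrableZr mD c (intP_ mD hL).
  apply: eq_integrable => // y _ /=; by rewrite EFinM.
rewrite -RintegralZr//; last exact: (intP_ mD hL).
rewrite -Rintegral_cst//.
rewrite -RintegralD//; last exact: (intcst_ eta _ mD).
apply: le_Rintegral => //.
- exact: (intnorm_ e0 mD hL).
- have := integrableD mD iZ (intcst_ eta (t * (1 - (1 + eps)^-1)) mD).
  by apply: eq_integrable => // y _ /=; rewrite EFinD.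
- move=> y _; apply: young_ => //; by rewrite ltrDl.
Qed.


Lemma I_lower_ (R : realType) (eps B : R) (eta : probability R R) (x : R) :
  0 < eps -> in_L eps B eta ->
  x * (1 - Defs.cdf eta x) <= \int[eta]_(y in `]x, +oo[%classic) y.
Proof.
move=> e0 hL.
have mG : measurable (`]x, +oo[%classic : set R) by exact: measurable_itv.
rewrite -cdfC_ -Rintegral_cst//.
apply: le_Rintegral => //.
- exact: (intcst_ eta x mG).
- exact: (intid_ e0 mG hL).
- by move=> y /=; rewrite in_itv /= andbT => /ltW.
Qed.

Lemma J_upper_ (R : realType) (eps B : R) (eta : probability R R) (x : R) :
  0 < eps -> in_L eps B eta ->
  \int[eta]_(y in `]-oo, x]%classic) y <= x * Defs.cdf eta x.
Proof.
move=> e0 hL.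
have mG : measurable (`]-oo, x]%classic : set R) by exact: measurable_itv.
rewrite /Defs.cdf -Rintegral_cst//.
apply: le_Rintegral => //.
- exact: (intid_ e0 mG hL).
- exact: (intcst_ eta x mG).
Qed.

Lemma split_ (R : realType) (eps B : R) (eta : probability R R) (x : R) :
  0 < eps -> in_L eps B eta ->
  \int[eta]_y y = \int[eta]_(y in `]-oo, x]%classic) y + \int[eta]_(y in `]x, +oo[%classic) y.
Proof.
move=> e0 hL.
rewrite -Rintegral_setU//.
- by rewrite itv_setU_setT.
- by rewrite itv_setU_setT; exact: (intid_ e0 measurableT hL).
- by rewrite -setCitvl disj_set2E setICr.
Qed.

Lemma absE_ (R : realType) (eps B : R) (eta : probability R R) (D : set R) :
  0 < eps -> in_L eps B eta -> measurable D ->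
  `|\int[eta]_(y in D) y| <= \int[eta]_(y in D) `|y|.
Proof.
move=> e0 hL mD; apply: le_normr_Rintegral => //; exact: (intid_ e0 mD hL).
Qed.


Lemma CVaR_lower_ (R : realType) (pi eps B : R)
  (hpi0 : 0 < pi) (hpi1 : pi < 1) (heps : 0 < eps) (hB : 0 < B)
  (eta : probability R R) (hL : in_L eps B eta) :
  - B `^ (1 + eps)^-1 <= CVaR pi eta.
Proof.
have [_ _ hF _] := VaR_facts_ hpi0 hpi1 heps hB hL.
set x := VaR pi eta in hF *.
set F := Defs.cdf eta x in hF *.
set I := \int[eta]_(y in `]x, +oo[%classic) y.
have -> : CVaR pi eta = ((F - pi) * x + I) / (1 - pi).
  rewrite /CVaR -/x -/F; change (fine _) with I.
  by field; rewrite subr_eq0 gt_eqF.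
have s0 : 0 < 1 - pi by rewrite subr_gt0.
have pe0 : 0 < 1 + eps by rewrite addr_gt0.
set M := B `^ (1 + eps)^-1.
have M0 : 0 < M by rewrite powR_gt0.
have MpE : M `^ (1 + eps) = B.
  by rewrite /M -powRrM mulVf ?gt_eqF// powRr1 ?(ltW hB).
have hY := @young_int_ R eps B eta setT M heps measurableT hL M0.
rewrite probability_setT /= mulr1 MpE in hY.
have hP := RintP_le_ measurableT hL.
have hc : 0 <= B^-1 * M / (1 + eps) by rewrite !mulr_ge0 ?invr_ge0 ?ltW.
have hY2 : \int[eta]_y `|y| <= M.
  apply: (le_trans hY).
  apply: (le_trans (lerD (ler_wpM2r hc hP) (lexx _))).
  rewrite le_eqVlt; apply/orP; left; apply/eqP.
  by field; rewrite !gt_eqF.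
have hA := absE_ heps hL measurableT.
have hE := split_ x heps hL.
have hI := I_lower_ x heps hL.
have hJ := J_upper_ x heps hL.
set E := \int[eta]_y y in hA hE.
set J := \int[eta]_(y in `]-oo, x]%classic) y in hE hJ.
have hEM : - M <= E.
  by rewrite lerNl; apply: le_trans hY2; apply: le_trans hA; rewrite -normrN ler_norm.
rewrite ler_pdivlMr//.
have h1 : 0 <= pi * (I - x * (1 - F)) by apply: mulr_ge0; [exact: ltW|rewrite subr_ge0].
have h2 : 0 <= (1 - pi) * (x * F - J) by apply: mulr_ge0; [exact: ltW|rewrite subr_ge0].
have h3 : (1 - pi) * (- M) <= (1 - pi) * E by rewrite ler_wpM2l// ltW.
rewrite hE in h3.
fold I in h3. lra.
Qed.


Lemma CVaR_upper_ (R : realType) (pi eps B : R)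
  (hpi0 : 0 < pi) (hpi1 : pi < 1) (heps : 0 < eps) (hB : 0 < B)
  (eta : probability R R) (hL : in_L eps B eta) :
  CVaR pi eta <= B `^ (1 + eps)^-1 * (1 - pi) `^ (- (1 + eps)^-1).
Proof.
have [_ _ hF hR] := VaR_facts_ hpi0 hpi1 heps hB hL.
set x := VaR pi eta in hF hR *.
set F := Defs.cdf eta x in hF *.
set I := \int[eta]_(y in `]x, +oo[%classic) y.
have -> : CVaR pi eta = ((F - pi) * x + I) / (1 - pi).
  rewrite /CVaR -/x -/F; change (fine _) with I.
  by field; rewrite subr_eq0 gt_eqF.
have s0 : 0 < 1 - pi by rewrite subr_gt0.
have pe0 : 0 < 1 + eps by rewrite addr_gt0.
set t := B `^ (1 + eps)^-1 * (1 - pi) `^ (- (1 + eps)^-1).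
have t0 : 0 < t by rewrite mulr_gt0 ?powR_gt0.
have tpE : t `^ (1 + eps) = B / (1 - pi) by rewrite powcalc_.
set G := `]x, +oo[%classic.
have mG : measurable G by exact: measurable_itv.
have hY := @young_int_ R eps B eta G t heps mG hL t0.
rewrite tpE cdfC_ -/F in hY.
set c := (B / (1 - pi))^-1 * t / (1 + eps) in hY.
set c2 := t * (1 - (1 + eps)^-1) in hY.
have c0 : 0 <= c.
  by rewrite /c; apply: mulr_ge0; [apply: mulr_ge0; [rewrite invr_ge0; apply: divr_ge0; exact: ltW|exact: ltW]|rewrite invr_ge0; exact: ltW].
have p1 : 1 < 1 + eps by rewrite ltrDl.
have hx := @young_ R (1 + eps) t x p1 t0.
rewrite tpE -/c -/c2 in hx.
have hIa : I <= \int[eta]_(y in G) `|y|.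
  by apply: le_trans (ler_norm _) (absE_ heps hL mG).
set P := \int[eta]_(y in G) `|y| `^ (1 + eps) in hY.
set m := fine (eta [set x]).
have hsplit : `[x, +oo[%classic = [set x] `|` G by rewrite /G setU1itv.
have hdisj : [set x] `&` G = set0.
  apply/seteqP; split => // y [/= ->]; rewrite /G /= in_itv /= ltxx.
  by [].
have hm : fine (eta `[x, +oo[%classic) = m + (1 - F).
  apply/EFin_inj; rewrite EFinD -(cdfC_ eta x) /m !etaE_//; try exact: measurable_set1.
  rewrite hsplit measureU//; exact: measurable_set1.
rewrite hm in hR.
have hPx : `|x| `^ (1 + eps) * m + P <= B.
  have := RintP_le_ (D := `[x, +oo[%classic) (measurable_itv _) hL.
  rewrite hsplit Rintegral_setU//; last 2 first.

  - rewrite -hsplit; exact: (intP_ (measurable_itv _) hL).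
  - by rewrite disj_set2E hdisj.
  rewrite -/P.
  suff -> : \int[eta]_(y in [set x]) `|y| `^ (1 + eps) = `|x| `^ (1 + eps) * m by [].
  rewrite (@eq_Rintegral _ _ _ eta [set x] (fun=> `|x| `^ (1 + eps))).
    by rewrite Rintegral_cst//; exact: measurable_set1.
  by move=> y; rewrite inE /= => ->.
have hm0 : 0 <= m by rewrite fine_ge0.
have hFp : 0 <= F - pi by rewrite subr_ge0.
rewrite ler_pdivrMr//.
have k1 : (F - pi) * x <= (F - pi) * (`|x| `^ (1 + eps) * c + c2).
  by rewrite ler_wpM2l// (le_trans (ler_norm _) hx).
have k2 : (F - pi) * (`|x| `^ (1 + eps) * c) <= m * (`|x| `^ (1 + eps) * c).
  have hFm : F - pi <= m by lra.
  by apply: ler_wpM2r => //; apply: mulr_ge0 => //; apply: powR_ge0.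
have k3 : (`|x| `^ (1 + eps) * m + P) * c <= B * c by rewrite ler_wpM2r.
have k4 : B * c = (1 - pi) * t / (1 + eps).
  by rewrite /c; field; rewrite !gt_eqF.
have k5 : c2 * (1 - pi) = t * (1 - pi) - (1 - pi) * t / (1 + eps).
  by rewrite /c2; field; rewrite gt_eqF.
lra.
Qed.


Unset Implicit Arguments.

Theorem lemma1 (R : realType) (pi eps B : R)
  (hpi0 : 0 < pi) (hpi1 : pi < 1) (heps : 0 < eps) (hB : 0 < B)
  (eta : probability R R) (hL : in_L eps B eta) :
  - B `^ (1 + eps)^-1 <= CVaR pi eta
  /\ CVaR pi eta <= B `^ (1 + eps)^-1 * (1 - pi) `^ (- (1 + eps)^-1)
  /\ - B `^ (1 + eps)^-1 * pi `^ (- (1 + eps)^-1) <= VaR pi eta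
  /\ VaR pi eta <= B `^ (1 + eps)^-1 * (1 - pi) `^ (- (1 + eps)^-1).
Proof.
have [h1 h2 _ _] := VaR_facts_ hpi0 hpi1 heps hB hL.
split; first exact: CVaR_lower_.
split; first exact: CVaR_upper_.
by split.
Qed.
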